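(* Let $\mathbb{A}$ be a Boolean algebra with the positive Grothendieck property, $(\mathbb{B},\mu)$ a metric Boolean algebra, and $\varphi,\varphi_n\in\mathcal{H}(\mathbb{A},\mathbb{B})$ ($n\in\omega$). Let $(A_n)$ be an antichain in $\mathbb{A}$ such that for some $\varepsilon>0$ and every $n\in\omega$ we have $d_\mu(\varphi_n(A_n),\varphi(A_n))\ge\varepsilon$. Then $(\varphi_n)$ does not converge pointwise metric to $\varphi$.
   Context: $\mathbb{A}$ has the positive Grothendieck property if every weak* convergent sequence of non-negative Radon measures on the Stone space $St(\mathbb{A})$ is weakly convergent. A metric Boolean algebra $(\mathbb{B},\mu)$ is a Boolean algebra with a strictly positive finitely additive probability measure $\mu$; $d_\mu(A,B)=\mu(A\triangle B)$. $\mathcal{H}(\mathbb{A},\mathbb{B})$ is the set of homomorphisms $\mathbb{A}\to\mathbb{B}$. An antichain is a sequence of pairwise disjoint elements. $(\varphi_n)$ converges pointwise metric to $\varphi$ if $d_\mu(\varphi_n(A),\varphi(A))\to0$ for every $A\in\mathbb{A}$. *)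

(* Defs.v *)
From HB Require Import structures.
From mathcomp Require Import all_boot all_order all_algebra.
From mathcomp Require Import all_classical all_reals all_analysis.
Unset Printing Implicit Defensive.
Import Order.TTheory GRing.Theory Num.Theory numFieldNormedType.Exports.
Local Open Scope classical_set_scope.
Local Open Scope ring_scope.

(* Boolean algebras are MathComp's complemented distributive lattices with
   top and bottom: ctbDistrLatticeType. *)

Definition is_bhom {dA dB : Order.disp_t} {A : ctbDistrLatticeType dA}
    {B : ctbDistrLatticeType dB} (f : A -> B) : Prop :=
  [/\ f Order.bottom = Order.bottom,
      f Order.top = Order.top,
      (forall x y, f (Order.join x y) = Order.join (f x) (f y)),
      (forall x y, f (Order.meet x y) = Order.meet (f x) (f y)) &
      (forall x, f (Order.compl x) = Order.compl (f x))].

Definition metric_measure {R : realType} {d : Order.disp_t}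
    {B : ctbDistrLatticeType d} (mu : B -> R) : Prop :=
  [/\ (forall x, 0 <= mu x),
      (forall x, x != Order.bottom -> 0 < mu x),
      mu Order.top = 1 &
      (forall x y, Order.meet x y = Order.bottom ->
         mu (Order.join x y) = mu x + mu y)].

Definition dmu {R : realType} {d : Order.disp_t} {B : ctbDistrLatticeType d}
    (mu : B -> R) (x y : B) : R :=
  mu (Order.join (Order.diff x y) (Order.diff y x)).

Definition antichain {d : Order.disp_t} {A : ctbDistrLatticeType d}
    (a : nat -> A) : Prop :=
  forall n m, n <> m -> Order.meet (a n) (a m) = Order.bottom.

Definition pointwise_metric_cvg {R : realType} {dA dB : Order.disp_t}
    {A : ctbDistrLatticeType dA} {B : ctbDistrLatticeType dB}
    (mu : B -> R) (phi_ : nat -> A -> B) (phi : A -> B) : Prop :=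
  forall a : A, (fun n => dmu mu (phi_ n a) (phi a)) @ \oo --> (0 : R).

(** To have an (always pointed) carrier type
    for the measurable structure, we realise St(A) as the subset [stone A]
    of the type [set A]; measures on St(A) are measures on [set A] carried
    by [stone A] (i.e. vanishing on its complement). *)
Definition ultrafilter {d : Order.disp_t} {A : ctbDistrLatticeType d}
    (u : set A) : Prop :=
  [/\ ~ u Order.bottom,
      (forall x y, u x -> (x <= y)%O -> u y),
      (forall x y, u x -> u y -> u (Order.meet x y)) &
      (forall x, u x \/ u (Order.compl x))].

Definition stone {d : Order.disp_t} (A : ctbDistrLatticeType d) : set (set A) :=
  [set u | ultrafilter u].

Definition stone_basic {d : Order.disp_t} {A : ctbDistrLatticeType d} (a : A)
  : set (set A) := [set u | stone A u /\ u a].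

Definition stone_open {d : Order.disp_t} {A : ctbDistrLatticeType d}
    (O : set (set A)) : Prop :=
  O `<=` stone A /\
  forall u, O u -> exists a : A, u a /\ stone_basic a `<=` O.

Definition stone_compact {d : Order.disp_t} {A : ctbDistrLatticeType d}
    (C : set (set A)) : Prop :=
  C `<=` stone A /\
  forall F : set (set (set A)),
    (forall O, F O -> stone_open O) ->
    C `<=` \bigcup_(O in F) O ->
    exists (n : nat) (O_ : nat -> set (set A)),
      (forall i, (i < n)%N -> F (O_ i)) /\
      C `<=` \bigcup_(i in [set i | (i < n)%N]) O_ i.

Definition stone_continuous {R : realType} {d : Order.disp_t}
    {A : ctbDistrLatticeType d} (f : set A -> R) : Prop :=
  forall u, stone A u -> forall e : R, 0 < e ->
    exists a : A, u a /\ forall v, stone_basic a v -> `|f v - f u| < e.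

Definition stone_opens {d : Order.disp_t} (A : ctbDistrLatticeType d)
  : set (set (set A)) := [set O | stone_open O].

Definition StoneBorel {d : Order.disp_t} (A : ctbDistrLatticeType d) :=
  g_sigma_algebraType (stone_opens A).

Definition stone_radon {R : realType} {d : Order.disp_t}
    {A : ctbDistrLatticeType d}
    (m : {measure set (StoneBorel A) -> \bar R}) : Prop :=
  [/\ m (~` stone A) = 0%E,
      (m (stone A) < +oo)%E &
      forall B : set (StoneBorel A), measurable B -> B `<=` stone A ->
        m B = ereal_sup [set m C | C in [set C | stone_compact C /\ C `<=` B]]].

Definition weakstar_cvg {R : realType} {d : Order.disp_t}
    {A : ctbDistrLatticeType d}
    (m_ : nat -> {measure set (StoneBorel A) -> \bar R})
    (m : {measure set (StoneBorel A) -> \bar R}) : Prop :=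
  forall f : set A -> R, stone_continuous f ->
    (fun n => (\int[m_ n]_(x in stone A) (f x)%:E)%E) @ \oo -->
      (\int[m]_(x in stone A) (f x)%:E)%E.

(** Restrictions to the cone of non-negative Radon measures of the bounded
    linear functionals on the Banach space M(St(A)) of signed Radon measures
    (total variation norm): additive, positively homogeneous and bounded
    by C * |m|(St(A)).  Every such map extends uniquely to an element of
    M(St(A))^*, and conversely. *)
Definition radon_functional {R : realType} {d : Order.disp_t}
    {A : ctbDistrLatticeType d}
    (Phi : {measure set (StoneBorel A) -> \bar R} -> R) : Prop :=
  [/\ (forall m1 m2 m3, stone_radon m1 -> stone_radon m2 -> stone_radon m3 ->
         (forall B, measurable B -> m3 B = (m1 B + m2 B)%E) ->
         Phi m3 = Phi m1 + Phi m2),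
      (forall (c : R) m1 m2, 0 <= c -> stone_radon m1 -> stone_radon m2 ->
         (forall B, measurable B -> m2 B = (c%:E * m1 B)%E) ->
         Phi m2 = c * Phi m1) &
      exists C : R, forall m, stone_radon m ->
         `|Phi m| <= C * fine (m (stone A))].

Definition weak_cvg {R : realType} {d : Order.disp_t}
    {A : ctbDistrLatticeType d}
    (m_ : nat -> {measure set (StoneBorel A) -> \bar R})
    (m : {measure set (StoneBorel A) -> \bar R}) : Prop :=
  forall Phi, radon_functional Phi ->
    (fun n => Phi (m_ n)) @ \oo --> Phi m.

Definition positive_grothendieck (R : realType) {d : Order.disp_t}
    (A : ctbDistrLatticeType d) : Prop :=
  forall (m_ : nat -> {measure set (StoneBorel A) -> \bar R})
         (m : {measure set (StoneBorel A) -> \bar R}),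
    (forall n, stone_radon (m_ n)) -> stone_radon m ->
    weakstar_cvg m_ m -> weak_cvg m_ m.

(* Main.v *)
Require Import Defs.
From HB Require Import structures.
From mathcomp Require Import all_boot all_order all_algebra.
From mathcomp Require Import all_classical all_reals all_analysis.
From mathcomp Require Import ring lra.
From mathcomp Require Import measurable_realfun.
Import Order.TTheory GRing.Theory Num.Theory numFieldNormedType.Exports.
Import Order.CBDistrLatticeTheory Order.CTBDistrLatticeTheory.
Set Implicit Arguments.
Unset Strict Implicit.


Local Open Scope classical_set_scope.

Section Ultra.
Context {d : Order.disp_t} (A : ctbDistrLatticeType d).
Local Open Scope order_scope.

Definition pfilter (F : set A) := [/\ ~ F \bot, F \top,
  (forall x y, F x -> x <= y -> F y) & (forall x y, F x -> F y -> F (x `&` y))].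

Lemma ultra_top (u : set A) : ultrafilter u -> u \top.
Proof. by case=> h0 hup _ hc; case: (hc \top) => // h; exact: hup _ _ h (lex1 _). Qed.

Lemma ultra_ncompl (u : set A) x : ultrafilter u -> u x -> ~ u (~` x).
Proof. by case=> h0 _ hI _ ux ucx; apply: h0; rewrite -(meetxC x); exact: hI. Qed.

Lemma ultra_compl (u : set A) x : ultrafilter u -> ~ u x -> u (~` x).
Proof. by case=> _ _ _ hc nx; case: (hc x). Qed.

Lemma ultra_up (u : set A) x y : ultrafilter u -> u x -> x <= y -> u y.
Proof. by case=> _ hup _ _; exact: hup. Qed.

Lemma ultra_meet (u : set A) x y : ultrafilter u -> u (x `&` y) <-> u x /\ u y.
Proof.
move=> hu; split; first by move=> h; split; apply: (ultra_up hu h); [exact: leIl|exact: leIr].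
by case: hu => _ _ hI _ [] /hI; apply.
Qed.

Lemma ultra_join (u : set A) x y : ultrafilter u -> u (x `|` y) -> u x \/ u y.
Proof.
move=> hu hxy; apply: contrapT => /not_orP [nx ny].
have hcx := ultra_compl hu nx; have hcy := ultra_compl hu ny.
have : u (~` x `&` ~` y) by exact: (proj2 (ultra_meet _ _ hu)) (conj hcx hcy).
by rewrite -complU; exact: ultra_ncompl.
Qed.

Lemma ultra_joinP (u : set A) x y : ultrafilter u -> u (x `|` y) <-> u x \/ u y.
Proof.
move=> hu; split; first exact: ultra_join.
by case=> h; apply: (ultra_up hu h); [exact: leUl|exact: leUr].
Qed.

Lemma ultra_bot (u : set A) : ultrafilter u -> ~ u \bot.
Proof. by case. Qed.

Lemma pfilter_gen (G : set A) x : pfilter G -> (forall g, G g -> g `&` x != \bot) ->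
  pfilter (fun y => exists g, G g /\ g `&` x <= y).
Proof.
case=> h0 h1 hup hI hx; split.
- by case=> g [Gg]; rewrite lex0; apply/negP; exact: hx.
- by exists \top; split => //; exact: lex1.
- by move=> y z [g [Gg gy]] yz; exists g; split => //; exact: le_trans yz.
- move=> y z [g [Gg gy]] [g' [Gg' gz]]; exists (g `&` g'); split; first exact: hI.
  rewrite lexI; apply/andP; split.
    by apply: le_trans gy; rewrite lexI leIr andbT; apply: leIxl; exact: leIl.
  by apply: le_trans gz; rewrite lexI leIr andbT; apply: leIxl; exact: leIr.
Qed.

Lemma ultra_ext (F0 : set A) : pfilter F0 -> exists u, ultrafilter u /\ F0 `<=` u.
Proof.
move=> hF0; have [h00 h01 h0up h0I] := hF0.
pose P := [set X : set A | pfilter (F0 `|` X)].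
have [X [PX Xmax]] : exists X, P X /\ forall B, X `<` B -> ~ P B.
  apply: Zorn_bigcup => F FP Ftot.
  have inU Y z : F Y -> (F0 `|` Y) z -> (F0 `|` \bigcup_(X in F) X) z.
    by move=> FY [?|?]; [left|right; exists Y].
  split.
  - case=> [//|[Y FY HY]]; by case: (FP _ FY) => + _ _ _; apply; right.
  - by left.
  - move=> x y [F0x|[Y FY Yx]] xy; first by left; exact: h0up xy.
    by apply: (inU Y) => //; case: (FP _ FY) => _ _ hup _; apply: hup xy; right.
  - move=> x y [F0x|[Y FY Yx]] [F0y|[Y' FY' Y'y]].
    + by left; exact: h0I.
    + by apply: (inU Y') => //; case: (FP _ FY') => _ _ _ hI; apply: hI; [left|right].
    + by apply: (inU Y) => //; case: (FP _ FY) => _ _ _ hI; apply: hI; [right|left].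
    + case: (Ftot _ _ FY FY') => sub.
        by apply: (inU Y') => //; case: (FP _ FY') => _ _ _ hI; apply: hI; right => //; exact: sub.
      by apply: (inU Y) => //; case: (FP _ FY) => _ _ _ hI; apply: hI; right => //; exact: sub.
exists (F0 `|` X); split; last by move=> x; left.
have hG := PX; case: PX => g0 g1 gup gI; split => // x.
have key z : ~ (F0 `|` X) z -> exists g, (F0 `|` X) g /\ g `&` z = \bot.
  move=> nz; apply: contrapT => hne.
  have hne' : forall g, (F0 `|` X) g -> g `&` z != \bot.
    by move=> g Gg; apply/eqP => e; apply: hne; exists g.
  have hB := pfilter_gen hG hne'.
  set B := (fun y => _) in hB.
  have XB : X `<=` B by move=> y Xy; exists y; split; [right|exact: leIl].
  apply: (Xmax B).
    split => // BX; apply: nz; right; apply: BX.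
    by exists \top; split; [left|rewrite meet1x].
  have e : F0 `|` B = B.
    by apply/seteqP; split => y; [case => // F0y; exists y; split; [left|exact: leIl]|right].
  exact: (eq_ind _ (@pfilter) hB _ (esym e)).
case: (pselect ((F0 `|` X) x)) => hx; first by left.
case: (pselect ((F0 `|` X) (~` x))) => hcx; first by right.
have [g [Gg gx]] := key _ hx; have [g' [Gg' gx']] := key _ hcx.
exfalso; apply: g0; apply: (gup (g `&` g')); first exact: gI.
rewrite -[g `&` g']meetx1 -(joinxC x) meetUr leUx; apply/andP; split.
  by rewrite -gx lexI leIr andbT; apply: leIxl; exact: leIl.
by rewrite -gx' lexI leIr andbT; apply: leIxl; exact: leIr.
Qed.

End Ultra.

Local Open Scope classical_set_scope.

Section Stone.
Context {d : Order.disp_t} (A : ctbDistrLatticeType d).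
Local Open Scope order_scope.
Local Notation basic := (@stone_basic d A).
Local Notation bigJ bs := (\big[Order.join/Order.bottom]_(b <- bs) b).

Lemma basic_up (a b : A) : a <= b -> basic a `<=` basic b.
Proof. by move=> ab u [su ua]; split => //; exact: ultra_up su ua ab. Qed.

Lemma basic_join (a b : A) : basic (a `|` b) = basic a `|` basic b.
Proof.
apply/seteqP; split => u.
  by case=> su /(ultra_join su) [ua|ub]; [left|right].
by case=> -[su h]; split => //; apply/(ultra_joinP _ _ su); [left|right].
Qed.

Lemma basic_meet (a b : A) : basic (a `&` b) = basic a `&` basic b.
Proof.
apply/seteqP; split => u.
  by case=> su /(ultra_meet _ _ su) [ua ub].
by case=> -[su ua] [_ ub]; split => //; apply/(ultra_meet _ _ su).
Qed.

Lemma basic_bot : basic \bot = set0.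
Proof.
rewrite predeqE => u; split => //; case=> su; exact: ultra_bot.
Qed.

Lemma basic_top : basic \top = stone A.
Proof. by apply/seteqP; split => u; [case|move=> su; split => //; exact: ultra_top]. Qed.

Lemma basic_compl (a : A) u : stone A u -> basic (~` a) u <-> ~ basic a u.
Proof.
move=> su; split; first by case=> _ uc [_ ua]; exact: (ultra_ncompl su ua).
by move=> h; split => //; apply: (ultra_compl su) => ua; apply: h.
Qed.

Lemma basic_sub_stone (a : A) : basic a `<=` stone A.
Proof. by move=> u []. Qed.

Lemma exists_ultra (a : A) : a != \bot -> exists u, stone A u /\ u a.
Proof.
move=> a0; have [|u [hu sub]] := @ultra_ext _ A [set y | a <= y].
  split => /=.
  - by rewrite lex0; apply/negP.
  - exact: lex1.
  - by move=> x y ax xy; exact: le_trans xy.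
  - by move=> x y ax ay; rewrite lexI ax ay.
by exists u; split => //; apply: sub => /=.
Qed.

Lemma basic_sub (a b : A) : basic a `<=` basic b -> a <= b.
Proof.
move=> ab; apply: contrapT => nab.
have : a `&` ~` b != \bot.
  by apply/negP => /eqP e; apply: nab; rewrite -(complK b) -disj_leC e.
move=> /exists_ultra [u [su uab]].
have [ua ucb] := proj1 (ultra_meet _ _ su) uab.
have [_ ub] := ab u (conj su ua).
exact: ultra_ncompl su ub ucb.
Qed.

Lemma basic_inj (a b : A) : basic a = basic b -> a = b.
Proof. by move=> e; apply/le_anti; rewrite !basic_sub // e. Qed.

Lemma ultra_bigJ (u : set A) (bs : seq A) : ultrafilter u ->
  u (bigJ bs) <-> exists2 b, b \in bs & u b.
Proof.
move=> su; elim: bs => [|b bs IH].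
  by rewrite big_nil; split => [/(ultra_bot su)//|[]].
rewrite big_cons (ultra_joinP _ _ su) IH; split.
  by case=> [ub|[c cbs uc]]; [exists b => //; rewrite inE eqxx|exists c => //; rewrite inE cbs orbT].
case=> c; rewrite inE => /orP[/eqP ->|cbs] uc; [left|right] => //; by exists c.
Qed.

Lemma bigJ_cat (bs cs : seq A) : bigJ (bs ++ cs) = bigJ bs `|` bigJ cs.
Proof. by rewrite big_cat. Qed.

Lemma cpt (P : A -> Prop) (a : A) :
  (forall u, stone A u -> u a -> exists b, P b /\ u b) ->
  exists bs : seq A, (forall b, b \in bs -> P b) /\ a <= bigJ bs.
Proof.
move=> H; apply: contrapT => nH.
pose F0 := [set y | exists bs : seq A, (forall b, b \in bs -> P b) /\ a `&` ~` bigJ bs <= y].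
have [|u [su sub]] := @ultra_ext _ A F0.
  split.
  - case=> bs [Pbs le0]; apply: nH; exists bs; split => //.
    by rewrite -(complK (bigJ bs)) -disj_leC -lex0.
  - by exists [::]; split => //; exact: lex1.
  - by move=> x y [bs [Pbs h]] xy; exists bs; split => //; exact: le_trans xy.
  - move=> x y [bs [Pbs hx]] [cs [Pcs hy]]; exists (bs ++ cs); split.
      by move=> b; rewrite mem_cat => /orP[]; [exact: Pbs|exact: Pcs].
    rewrite bigJ_cat complU lexI; apply/andP; split.
      by apply: le_trans hx; rewrite lexI leIl /=; apply: leIxr; exact: leIl.
    by apply: le_trans hy; rewrite lexI leIl /=; apply: leIxr; exact: leIr.
have ua : u a by apply: sub; exists [::]; split => //; rewrite big_nil compl0 meetx1.
have [b [Pb ub]] := H u su ua.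
have ucb : u (~` b).
  apply: sub; exists [:: b]; split; first by move=> c; rewrite inE => /eqP ->.
  by rewrite big_seq1; exact: leIr.
exact: ultra_ncompl su ub ucb.
Qed.

End Stone.

Local Open Scope classical_set_scope.

Section Opens.
Context {d : Order.disp_t} (A : ctbDistrLatticeType d).
Local Notation basic := (@stone_basic d A).

Lemma open_sub (W : set (set A)) : stone_open W -> W `<=` stone A.
Proof. by case. Qed.

Lemma open_basic (a : A) : stone_open (basic a).
Proof. by split; [exact: basic_sub_stone|move=> u [su ua]; exists a; split]. Qed.

Lemma open0 : stone_open (set0 : set (set A)).
Proof. by split => // u. Qed.

Lemma openI (W1 W2 : set (set A)) : stone_open W1 -> stone_open W2 ->
  stone_open (W1 `&` W2).
Proof.
move=> [s1 h1] [s2 h2]; split; first by move=> u [/s1].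
move=> u [/[dup] /s1 su /h1 [a1 [ua1 b1]] /h2 [a2 [ua2 b2]]].
exists (Order.meet a1 a2); split; first by apply/(ultra_meet _ _ su).
by rewrite basic_meet => v [/b1 ? /b2 ?].
Qed.

Lemma open_bigcup I (D : set I) (F : I -> set (set A)) :
  (forall i, D i -> stone_open (F i)) -> stone_open (\bigcup_(i in D) F i).
Proof.
move=> h; split; first by move=> u [i Di /(open_sub (h i Di))].
move=> u [i Di Fu]; have [_ /(_ u Fu) [a [ua ba]]] := h i Di.
by exists a; split => // v /ba Fv; exists i.
Qed.

Lemma openU (W1 W2 : set (set A)) : stone_open W1 -> stone_open W2 ->
  stone_open (W1 `|` W2).
Proof.
move=> [s1 h1] [s2 h2]; split; first by move=> u [/s1|/s2].
move=> u [/h1 [a [ua ba]]|/h2 [a [ua ba]]]; exists a; split => // v.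
  by move/ba; left.
by move/ba; right.
Qed.

Lemma open_big (n : nat) (F : nat -> set (set A)) :
  (forall i, stone_open (F i)) -> stone_open (\big[setU/set0]_(i < n) F i).
Proof.
move=> h; elim: n => [|n IH]; first by rewrite big_ord0; exact: open0.
by rewrite big_ord_recr /=; exact: openU.
Qed.

Lemma open_stone : stone_open (stone A).
Proof. by rewrite -basic_top; exact: open_basic. Qed.

End Opens.

Section Content.
Context {d : Order.disp_t} (A : ctbDistrLatticeType d) (R : realType).
Local Notation basic := (@stone_basic d A).
Local Notation bigJ bs := (\big[Order.join/Order.bottom]_(b <- bs) b).

Record fcontent := FContent {
  cnt :> A -> R;
  cnt_ge0 : forall x, (0 <= cnt x)%R;
  cnt_add : forall x y, Order.meet x y = Order.bottom ->
    cnt (Order.join x y) = (cnt x + cnt y)%R }.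

Variable nu : fcontent.
Local Open Scope ring_scope.

Lemma cnt0 : nu Order.bottom = 0.
Proof.
have := cnt_add nu (meetx0 Order.bottom); rewrite joinx0 => h.
by apply: (@addrI _ (nu Order.bottom)); rewrite addr0 -h.
Qed.

Lemma cnt_split (a b : A) : (a <= b)%O ->
  nu b = nu a + nu (Order.meet b (Order.compl a)).
Proof.
move=> ab; rewrite -cnt_add; last first.
  by rewrite meetCA meetxC meetx0.
congr (cnt nu _); rewrite joinIr joinxC meetx1.
by apply/esym/join_idPr.
Qed.

Lemma cnt_le (a b : A) : (a <= b)%O -> nu a <= nu b.
Proof. by move=> /cnt_split ->; rewrite lerDl cnt_ge0. Qed.

Lemma cnt_top (a : A) : nu a <= nu Order.top.
Proof. exact/cnt_le/lex1. Qed.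

Lemma cnt_sub (a b : A) : nu (Order.join a b) <= nu a + nu b.
Proof.
have -> : Order.join a b = Order.join a (Order.meet b (Order.compl a)).
  by rewrite joinIr joinxC meetx1.
rewrite cnt_add; last by rewrite meetCA meetxC meetx0.
by rewrite lerD2l cnt_le // leIl.
Qed.

Local Open Scope ereal_scope.

Definition nuO (W : set (set A)) : \bar R :=
  ereal_sup [set (nu a)%:E | a in [set a | basic a `<=` W]].

Definition nuS (E : set (set A)) : \bar R :=
  ereal_inf [set nuO W | W in [set W | stone_open W /\ E `&` stone A `<=` W]].

Lemma nuO_ub (W : set (set A)) a : basic a `<=` W -> (nu a)%:E <= nuO W.
Proof. by move=> h; apply: ereal_sup_ubound; exists a. Qed.

Lemma nuO_ge0 W : 0 <= nuO W.
Proof.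
apply: le_trans (nuO_ub (a := Order.bottom) _); first by rewrite cnt0.
by rewrite basic_bot.
Qed.

Lemma nuO_le_top W : nuO W <= (nu Order.top)%:E.
Proof. by apply: ge_ereal_sup => _ [a _ <-]; rewrite lee_fin cnt_top. Qed.

Lemma nuO_fin W : nuO W \is a fin_num.
Proof.
by rewrite ge0_fin_numE ?nuO_ge0 // (le_lt_trans (nuO_le_top W)) // ltry.
Qed.

Definition rO W := fine (nuO W).
Lemma rOE W : nuO W = (rO W)%:E.
Proof. by rewrite fineK // nuO_fin. Qed.

Lemma rO_ub W a : basic a `<=` W -> (nu a <= rO W)%R.
Proof. by move/nuO_ub; rewrite rOE lee_fin. Qed.

Lemma rO_lub W (r : R) : (forall a, basic a `<=` W -> nu a <= r)%R -> (rO W <= r)%R.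
Proof.
move=> h; rewrite -lee_fin -rOE; apply: ge_ereal_sup => _ [a ha <-].
by rewrite lee_fin; exact: h.
Qed.

Lemma rO_approx W (e : R) : (0 < e)%R -> exists a, basic a `<=` W /\ (rO W - e < nu a)%R.
Proof.
move=> e0; have : (rO W - e)%:E < nuO W by rewrite rOE lte_fin ltrBlDr ltrDl.
by move/ereal_sup_gt => [_ [a ha <-]]; rewrite lte_fin => h; exists a.
Qed.

Lemma rO_ge0 W : (0 <= rO W)%R.
Proof. by rewrite -lee_fin -rOE nuO_ge0. Qed.

Lemma rO_le W1 W2 : W1 `<=` W2 -> (rO W1 <= rO W2)%R.
Proof. by move=> h; apply: rO_lub => a ha; apply: rO_ub; exact: subset_trans h. Qed.

Lemma rO_top W : (rO W <= nu Order.top)%R.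
Proof. by rewrite -lee_fin -rOE nuO_le_top. Qed.

Definition admissible E W := stone_open W /\ E `&` stone A `<=` W.

Lemma nuS_lb E W : admissible E W -> nuS E <= nuO W.
Proof. by move=> h; apply: ereal_inf_lbound; exists W. Qed.

Lemma nuS_ge0 E : 0 <= nuS E.
Proof. by apply: le_ereal_inf_tmp => _ [W _ <-]; exact: nuO_ge0. Qed.

Lemma nuS_fin E : nuS E \is a fin_num.
Proof.
rewrite ge0_fin_numE ?nuS_ge0 //; apply: (le_lt_trans (nuS_lb (W := stone A) _)).
  by split; [exact: open_stone|exact: subIsetr].
by rewrite rOE ltry.
Qed.

Definition rS E := fine (nuS E).
Lemma rSE E : nuS E = (rS E)%:E.
Proof. by rewrite fineK // nuS_fin. Qed.

Lemma rS_lb E W : admissible E W -> (rS E <= rO W)%R.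
Proof. by move/nuS_lb; rewrite rSE rOE lee_fin. Qed.

Lemma rS_glb E (r : R) : (forall W, admissible E W -> r <= rO W)%R -> (r <= rS E)%R.
Proof.
move=> h; rewrite -lee_fin -rSE; apply: le_ereal_inf_tmp => _ [W hW <-].
by rewrite rOE lee_fin; exact: h.
Qed.

Lemma rS_approx E (e : R) : (0 < e)%R -> exists W, admissible E W /\ (rO W < rS E + e)%R.
Proof.
move=> e0; have : nuS E < (rS E + e)%:E by rewrite rSE lte_fin ltrDl.
by move/ereal_inf_lt => [_ [W hW <-]]; rewrite rOE lte_fin => h; exists W.
Qed.

Lemma rS_ge0 E : (0 <= rS E)%R.
Proof. by rewrite -lee_fin -rSE nuS_ge0. Qed.

Lemma rS_le E1 E2 : E1 `<=` E2 -> (rS E1 <= rS E2)%R.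
Proof.
move=> h; apply: rS_glb => W [oW sW]; apply: rS_lb; split => //.
by apply: subset_trans sW; apply: setSI.
Qed.

Lemma nuS_le E1 E2 : E1 `<=` E2 -> nuS E1 <= nuS E2.
Proof. by move=> h; rewrite !rSE lee_fin rS_le. Qed.

Lemma rS_open W : stone_open W -> (rS W <= rO W)%R.
Proof. by move=> oW; apply: rS_lb; split => //; exact: subIsetl. Qed.

Lemma rS_basic a : rS (basic a) = nu a.
Proof.
apply/le_anti/andP; split.
  apply: le_trans (rS_open (open_basic a)) _.
  by apply: rO_lub => b /basic_sub; exact: cnt_le.
apply: rS_glb => W [_ sW]; apply: rO_ub => u bu; apply: sW; split => //.
exact: basic_sub_stone bu.
Qed.

Lemma nuS0 : nuS set0 = 0.
Proof.
apply/le_anti/andP; split; last exact: nuS_ge0.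
apply: le_trans (nuS_lb (W := set0) _) _; first by split; [exact: open0|].
rewrite rOE lee_fin; apply: rO_lub => a ha.
have : (a <= Order.bottom)%O by apply: basic_sub; rewrite basic_bot.
by move/cnt_le; rewrite cnt0.
Qed.

End Content.

Local Open Scope classical_set_scope.

Section Outer.
Context {d : Order.disp_t} (A : ctbDistrLatticeType d) (R : realType).
Local Notation basic := (@stone_basic d A).
Local Notation bigJ bs := (\big[Order.join/Order.bottom]_(b <- bs) b).
Variable nu : fcontent A R.
Local Open Scope ring_scope.

Lemma rO_U W1 W2 : stone_open W1 -> stone_open W2 ->
  rO nu (W1 `|` W2) <= rO nu W1 + rO nu W2.
Proof.
move=> [s1 h1] [s2 h2]; apply: rO_lub => a ha.
have [|bs [Pbs abs]] := @cpt _ A (fun b => basic b `<=` W1 \/ basic b `<=` W2) a.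
  move=> u su ua; case: (ha u (conj su ua)) => [/h1 [b [ub hb]]|/h2 [b [ub hb]]].
    by exists b; split => //; left.
  by exists b; split => //; right.
pose c1 := bigJ [seq b <- bs | `[< basic b `<=` W1 >]].
pose c2 := bigJ [seq b <- bs | ~~ `[< basic b `<=` W1 >]].
have hc1 : basic c1 `<=` W1.
  move=> u [su /(ultra_bigJ _ su) [b]]; rewrite mem_filter => /andP [/asboolP h _] ub.
  exact: h u (conj su ub).
have hc2 : basic c2 `<=` W2.
  move=> u [su /(ultra_bigJ _ su) [b]]; rewrite mem_filter => /andP [/asboolP h bin] ub.
  by case: (Pbs b bin) => // h'; apply: h'; split.
have ac : (a <= Order.join c1 c2)%O.
  apply: basic_sub => u [su ua]; split => //.
  have /(ultra_bigJ _ su) [b bin ub] := ultra_up su ua abs.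
  apply/(ultra_joinP _ _ su); case: (boolP `[< basic b `<=` W1 >]) => h; [left|right];
  by apply/(ultra_bigJ _ su); exists b => //; rewrite mem_filter h.
apply: le_trans (cnt_le nu ac) _; apply: le_trans (cnt_sub nu _ _) _.
by apply: lerD; apply: rO_ub.
Qed.

Lemma rO_bigU (F : nat -> set (set A)) n : (forall i, stone_open (F i)) ->
  rO nu (\big[setU/set0]_(i < n) F i) <= \sum_(i < n) rO nu (F i).
Proof.
move=> oF; elim: n => [|n IH].
  rewrite big_ord0 big_ord0; apply: rO_lub => a ha.
  have : (a <= Order.bottom)%O by apply: basic_sub; rewrite basic_bot.
  by move/(cnt_le nu); rewrite cnt0.
rewrite big_ord_recr big_ord_recr /=; apply: le_trans (rO_U _ _) _.
- exact: open_big.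
- exact: oF.
by rewrite lerD2r.
Qed.

Lemma find_N (W : nat -> set (set A)) (bs : seq A) :
  (forall b, b \in bs -> exists i, basic b `<=` W i) ->
  exists N, forall b, b \in bs -> basic b `<=` \bigcup_(i in `I_N) W i.
Proof.
elim: bs => [|b bs IH] h; first by exists 0%N.
have [i hi] := h b (mem_head _ _).
have [N hN] := IH (fun c cin => h c (@mem_behead _ (b :: bs) _ cin)).
exists (maxn N i.+1) => c; rewrite inE => /orP [/eqP ->|cin] u /=.
  by move/hi => Wu; exists i => //=; rewrite leq_max ltnSn orbT.
move/(hN c cin) => [j /= jN Wu]; exists j => //=.
by rewrite leq_max; apply/orP; left.
Qed.

Lemma geom_sum (e : R) n : \sum_(i < n) e / 2 ^+ i.+1 = e - e / 2 ^+ n.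
Proof.
elim: n => [|n IH]; first by rewrite big_ord0 expr0 divr1 subrr.
rewrite big_ord_recr /= IH exprS.
have h2 : (2 : R) ^+ n != 0 by rewrite expf_neq0.
by field.
Qed.

Local Open Scope ereal_scope.

Lemma nuS_sigma : sigma_subadditive (nuS nu).
Proof.
move=> F; apply/lee_addgt0Pr => e e0.
have /choice [W hW] : forall i, exists W, admissible (F i) W /\
    (rO nu W < rS nu (F i) + e / 2 ^+ i.+1)%R.
  move=> i; apply: rS_approx; apply: divr_gt0 => //; exact: exprn_gt0.
have oW : stone_open (\bigcup_i W i).
  by apply: open_bigcup => i _; case: (hW i) => -[].
have adm : admissible (\bigcup_n F n) (\bigcup_i W i).
  split => // u [[i _ Fu] su]; exists i => //; case: (hW i) => -[_ +] _; apply; by split.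
apply: le_trans (nuS_lb nu adm) _.
apply: ge_ereal_sup => _ [a ha <-].
have [|bs [Pbs abs]] := @cpt _ A (fun b => exists i, basic b `<=` W i) a.
  move=> u su ua; have [i _ Wu] := ha u (conj su ua).
  have [[[_ hWi] _] _] := hW i.
  by have [b [ub hb]] := hWi u Wu; exists b; split => //; exists i.
have [N hN] := find_N Pbs.
have aN : basic a `<=` \big[setU/set0]_(i < N) W i.
  rewrite -bigcup_mkord => u [su ua].
  have /(ultra_bigJ _ su) [b bin ub] := ultra_up su ua abs.
  exact: hN b bin u (conj su ub).
have h1 := rO_ub nu aN; have h2 := rO_bigU N (fun i => (hW i).1.1).
have h3 : (\sum_(i < N) rO nu (W i) <= \sum_(i < N) rS nu (F i) + e)%R.
  apply: le_trans (_ : \sum_(i < N) (rS nu (F i) + e / 2 ^+ i.+1) <= _)%R.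
    by apply: ler_sum => i _; apply/ltW; case: (hW i).
  rewrite big_split /= geom_sum lerD2l lerBlDr lerDl.
  by apply/ltW; apply: divr_gt0 => //; exact: exprn_gt0.
have h4 : (\sum_(i < N) rS nu (F i))%:E <= \sum_(i <oo) nuS nu (F i).
  rewrite -sumEFin; under eq_bigr do rewrite -rSE.
  rewrite -(big_mkord xpredT (fun i => nuS nu (F i))).
  by apply: nneseries_lim_ge => n _ _; exact: nuS_ge0.
apply: le_trans (_ : ((\sum_(i < N) rS nu (F i))%:E + e%:E) <= _).
  by rewrite -EFinD lee_fin; apply: le_trans h1 (le_trans h2 h3).
by rewrite leeD2r.
Qed.

HB.instance Definition _ := isOuterMeasure.Build R (set A) (nuS nu)
  (nuS0 nu) (nuS_ge0 nu) (@nuS_le _ _ _ nu) nuS_sigma.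

Lemma cara_open O : stone_open O -> (nuS nu).-caratheodory O.
Proof.
move=> oO; apply: le_caratheodory_measurable => X.
change (nuS nu (X `&` O) + nuS nu (X `&` ~` O) <= nuS nu X)%E.
rewrite !rSE -EFinD lee_fin; apply: rS_glb => W [oW sW].
apply/ler_addgt0Pr => e e0.
have oWO := openI oW oO.
have [a [ha hlt]] := rO_approx nu (W `&` O) e0.
have h1 : (rS nu (X `&` O) <= rO nu (W `&` O))%R.
  apply: rS_lb; split => // u [[Xu Ou] su]; split => //; exact: sW.
have ob := openI oW (open_basic (Order.compl a)).
have h2 : (rS nu (X `&` ~` O) <= rO nu (W `&` basic (Order.compl a)))%R.
  apply: rS_lb; split => // u [[Xu nOu] su]; split; first exact: sW.
  by apply/(basic_compl _ su) => /ha [].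
have h3 : (nu a + rO nu (W `&` basic (Order.compl a)) <= rO nu W)%R.
  rewrite addrC -lerBrDr; apply: rO_lub => b hb.
  have bca : (b <= Order.compl a)%O.
    by apply: basic_sub; apply: subset_trans hb _; exact: subIsetr.
  have ab : Order.meet a b = Order.bottom.
    by apply/eqP; rewrite meetC disj_leC.
  rewrite lerBrDr addrC -cnt_add //; apply: rO_ub.
  rewrite basic_join => u [/ha [] //|/hb []//].
have := rO_ge0 nu (W `&` basic (Order.compl a)).
lra.
Qed.

Lemma cara_measurable (E : set (StoneBorel A)) : measurable E ->
  (nuS nu).-caratheodory E.
Proof.
move=> mE; apply: (smallest_sub _ _ mE) => //.
  split.
  - exact: caratheodory_measurable_set0.
  - by move=> B cB; rewrite setTD; exact: caratheodory_measurable_setC.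
  - by move=> B cB; exact: caratheodory_measurable_bigcup.
by move=> O oO; exact: cara_open.
Qed.

Definition Mu : set (StoneBorel A) -> \bar R := nuS nu.

Lemma Mu0 : Mu set0 = 0. Proof. exact: nuS0. Qed.
Lemma Mu_ge0 E : 0 <= Mu E. Proof. exact: nuS_ge0. Qed.
Lemma Mu_sigma : semi_sigma_additive Mu.
Proof.
move=> F mF tF mU.
exact: (@caratheodory_measure_sigma_additive R (set A) (nuS nu) F
  (fun i => cara_measurable (mF i)) tF (cara_measurable mU)).
Qed.

HB.instance Definition _ := isMeasure.Build _ (StoneBorel A) R Mu Mu0 Mu_ge0 Mu_sigma.

End Outer.

Local Open Scope classical_set_scope.

Section Compact.
Context {d : Order.disp_t} (A : ctbDistrLatticeType d).
Local Notation basic := (@stone_basic d A).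

Lemma closed_compact (W : set (set A)) : stone_open W ->
  stone_compact (stone A `&` ~` W).
Proof.
move=> [sW hW]; split; first exact: subIsetl.
move=> F oF cover.
have [|bs [Pbs abs]] := @cpt _ A
  (fun b => basic b `<=` W \/ exists Oo, F Oo /\ basic b `<=` Oo) Order.top.
  move=> u su _; case: (pselect (W u)) => Wu.
    by have [b [ub hb]] := hW u Wu; exists b; split => //; left.
  have [Oo FO Ou] := cover u (conj su Wu).
  have [_ /(_ u Ou) [b [ub hb]]] := oF Oo FO.
  by exists b; split => //; right; exists Oo.
pose g b := if pselect (exists Oo, F Oo /\ basic b `<=` Oo) is left h
  then projT1 (cid h) else set0.
have gP b : (exists Oo, F Oo /\ basic b `<=` Oo) -> F (g b) /\ basic b `<=` g b.
  rewrite /g; case: pselect => // h _; exact: projT2 (cid h).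
pose bs' := [seq b <- bs | ~~ `[< basic b `<=` W >]].
have Pbs' b : b \in bs' -> F (g b) /\ basic b `<=` g b.
  rewrite mem_filter => /andP [/asboolP nW bin]; apply: gP.
  by case: (Pbs b bin).
exists (size bs'), (fun i => g (nth Order.bottom bs' i)); split.
  by move=> i ilt; have [] := Pbs' _ (mem_nth Order.bottom ilt).
move=> u [su nWu].
have /(ultra_bigJ _ su) [b bin ub] := ultra_up su (ultra_top su) abs.
have bin' : b \in bs'.
  rewrite mem_filter bin andbT; apply/negP => /asboolP h.
  by apply: nWu; apply: h; split.
exists (index b bs'); first by rewrite /= index_mem.
by rewrite nth_index //; have [_] := Pbs' _ bin'; apply; split.
Qed.

End Compact.

Section Radon.
Context {d : Order.disp_t} (A : ctbDistrLatticeType d) (R : realType).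
Local Notation basic := (@stone_basic d A).
Variable nu : fcontent A R.
Local Notation M := (Mu nu).

Lemma stone_open_measurable (W : set (StoneBorel A)) : stone_open W -> measurable W.
Proof. by move=> oW; apply: sub_gen_smallest. Qed.

Lemma measurable_stone : measurable (stone A : set (StoneBorel A)).
Proof. by apply: stone_open_measurable; exact: open_stone. Qed.

Lemma measurable_basic a : measurable (basic a : set (StoneBorel A)).
Proof. by apply: stone_open_measurable; exact: open_basic. Qed.

Lemma MuE (E : set (StoneBorel A)) : M E = (rS nu E)%:E.
Proof. exact: (rSE nu E). Qed.

Lemma Mu_basic a : M (basic a) = (nu a)%:E.
Proof. by rewrite MuE rS_basic. Qed.

Lemma Mu_le (E1 E2 : set (StoneBorel A)) : E1 `<=` E2 -> (M E1 <= M E2)%E.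
Proof. exact: nuS_le. Qed.

Lemma Mu_null (E : set (StoneBorel A)) : E `&` stone A = set0 -> M E = 0%E.
Proof.
move=> E0; apply/le_anti/andP; split; last exact: Mu_ge0.
apply: le_trans (nuS_lb nu (W := set0) _) _; first by split; [exact: open0|rewrite E0].
rewrite rOE lee_fin; apply: rO_lub => a ha.
have : (a <= Order.bottom)%O by apply: basic_sub; rewrite basic_bot.
by move/(cnt_le nu); rewrite cnt0.
Qed.

Lemma radon_Mu : stone_radon M.
Proof.
split.
- by apply: Mu_null; rewrite setICl.
- by simpl; rewrite MuE ltry.
move=> B mB Bs; apply/le_anti/andP; split; last first.
  by apply: ge_ereal_sup => _ [C [_ CB] <-]; exact: Mu_le.
apply/lee_addgt0Pr => e e0.
pose B' := (stone A `\` B : set (StoneBorel A)).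
have mB' : measurable B' by apply: measurableD => //; exact: measurable_stone.
have [W [[oW sW] hW]] := rS_approx nu B' e0.
pose C := stone A `&` ~` W.
have CB : C `<=` B.
  move=> u [su nWu]; apply: contrapT => nBu; apply: nWu; apply: sW; by split.
have mW : measurable (W : set (StoneBorel A)) by exact: stone_open_measurable.
have mC : measurable (C : set (StoneBorel A)).
  by apply: measurableI; [exact: measurable_stone|exact: measurableC].
have e1 : M (stone A) = (M B + M B')%E.
  rewrite -measureU //; last by rewrite /B' setDE setICA setICr setI0.
  by congr (M _); rewrite setDUK.
have e2 : M (stone A) = (M C + M W)%E.
  rewrite -measureU //; last by rewrite /C -setIA setICl setI0.
  congr (M _); rewrite /C setUC; apply/seteqP; split => u.
    by move=> su; case: (pselect (W u)) => Wu; [left|right].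
  by case=> [/(open_sub oW)|[]].
have hWS := rS_open nu oW.
have f1 : (rS nu (stone A) = rS nu B + rS nu B')%R.
  by apply: EFin_inj; rewrite EFinD; move: e1; simpl; rewrite !MuE.
have f2 : (rS nu (stone A) = rS nu C + rS nu W)%R.
  by apply: EFin_inj; rewrite EFinD; move: e2; simpl; rewrite !MuE.
apply: le_trans (_ : ((rS nu C)%:E + e%:E) <= _)%E.
  by simpl; rewrite MuE -EFinD lee_fin; lra.
rewrite leeD2r //; apply: ereal_sup_ubound; exists C; last exact: MuE.
by split => //; exact: closed_compact.
Qed.

End Radon.

Local Open Scope classical_set_scope.

Lemma RmE (R : realType) : (@measurable _ R) = <<s (@RGenOpens.G R) >>.
Proof. exact: RGenOpens.measurableE. Qed.

Lemma bounded_of (R : realType) T (f : T -> R) (D : set T) (B : R) :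
  (forall x, D x -> `|f x| <= B)%R -> [bounded f x | x in D].
Proof.
move=> h; exists B; split; first exact: num_real.
by move=> M BM x Dx; exact: le_trans (h x Dx) (ltW BM).
Qed.

Section Integrals.
Context {d : Order.disp_t} (A : ctbDistrLatticeType d) (R : realType).
Local Notation basic := (@stone_basic d A).
Local Notation bigJ bs := (\big[Order.join/Order.bottom]_(b <- bs) b).
Local Open Scope ring_scope.

Lemma meas_cont (f : set A -> R) : stone_continuous f ->
  measurable_fun (stone A : set (StoneBorel A)) (f : StoneBorel A -> R).
Proof.
move=> cf.
apply: (@measurability _ _ (StoneBorel A) R _ _ (@RGenOpens.G R) (RmE R)).
move=> _ [Y [x [y ->]] <-].
apply: sub_gen_smallest; split; first exact: subIsetl.
move=> u [su /=]; rewrite in_itv /= => /andP [xf fy].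
have [|a [ua ha]] := cf u su (Num.min (f u - x) (y - f u)).
  by rewrite lt_min !subr_gt0 xf fy.
exists a; split => // v bv; split; first by case: bv.
have := ha v bv; rewrite lt_min => /andP [h1 h2].
rewrite /= in_itv /=; apply/andP; split.
  by move: h1; rewrite ltr_norml => /andP [? ?]; lra.
by move: h2; rewrite ltr_norml => /andP [? ?]; lra.
Qed.

Definition Gs (s : seq (A * R)) (v : set A) : R :=
  \sum_(x <- s) x.2 * \1_(basic x.1) v.

Lemma ind1 (S : set (set A)) v : S v -> \1_S v = 1 :> R.
Proof. by move=> Sv; rewrite indicE mem_set. Qed.

Lemma ind0 (S : set (set A)) v : ~ S v -> \1_S v = 0 :> R.
Proof. by move=> Sv; rewrite indicE memNset. Qed.

Lemma approx (f : set A -> R) (e : R) : stone_continuous f -> 0 < e ->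
  exists s : seq (A * R), forall v, stone A v -> `|f v - Gs s v| <= e.
Proof.
move=> cf e0.
pose P b := forall v w, basic b v -> basic b w -> `|f v - f w| <= e.
have [|bs [Pbs abs]] := @cpt _ A P Order.top.
  move=> u su _; have [|a [ua ha]] := cf u su (e / 2); first by apply: divr_gt0.
  exists a; split => // v w bv bw.
  have h1 := ha v bv; have h2 := ha w bw.
  have := ler_distD (f u) (f v) (f w); rewrite (distrC (f u) (f w)) => h3.
  lra.
suff: exists s : seq (A * R), forall v, stone A v ->
    (v (bigJ bs) -> `|f v - Gs s v| <= e) /\ (~ v (bigJ bs) -> Gs s v = 0).
  case=> s hs; exists s => v sv; apply: (hs v sv).1.
  exact: ultra_up sv (ultra_top sv) abs.
elim: bs Pbs {abs} => [|b bs IH] hP.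
  exists [::] => v sv; split; last by move=> _; rewrite /Gs big_nil.
  by rewrite big_nil => /(ultra_bot sv).
have [s' hs'] := IH (fun c cin => hP c (@mem_behead _ (b :: bs) _ cin)).
have Pb : P b by apply: hP; exact: mem_head.
pose rb := if pselect (exists w, basic b w) is left h then f (projT1 (cid h)) else 0.
have hrb v : basic b v -> `|f v - rb| <= e.
  move=> bv; rewrite /rb; case: pselect => [h|n]; last by exfalso; apply: n; exists v.
  by case: (cid h) => w bw /=; exact: Pb.
exists ((b, rb) :: [seq (Order.meet x.1 (Order.compl b), x.2) | x <- s']) => v sv.
have GE : Gs ((b, rb) :: [seq (Order.meet x.1 (Order.compl b), x.2) | x <- s']) v =
    rb * \1_(basic b) v + \sum_(j <- s') j.2 * \1_(basic (Order.meet j.1 (Order.compl b))) v.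
  by rewrite /Gs big_cons big_map.
rewrite GE.
case: (pselect (v b)) => vb.
  have -> : \sum_(j <- s') j.2 * \1_(basic (Order.meet j.1 (Order.compl b))) v = 0.
    rewrite big1 // => x _; rewrite ind0 ?mulr0 //.
    by rewrite basic_meet => -[_ [_]]; exact: ultra_ncompl sv vb.
  rewrite ind1 ?mulr1 ?addr0; last by split.
  split; first by move=> _; apply: hrb; split.
  by move=> h; exfalso; apply: h; rewrite big_cons; apply/(ultra_joinP _ _ sv); left.
have vcb : v (Order.compl b) by exact: ultra_compl sv vb.
rewrite ind0 ?mulr0 ?add0r; last by case.
have -> : \sum_(j <- s') j.2 * \1_(basic (Order.meet j.1 (Order.compl b))) v =
    Gs s' v.
  apply: eq_bigr => x _; congr (_ * _); rewrite basic_meet.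
  case: (pselect (basic x.1 v)) => bx.
    by rewrite !ind1 //; split => //; split.
  by rewrite !ind0 // => -[].
rewrite big_cons; split.
  by move/(ultra_joinP _ _ sv) => [//|h]; exact: (hs' v sv).1.
by move=> h; apply: (hs' v sv).2 => h'; apply: h; apply/(ultra_joinP _ _ sv); right.
Qed.

Variable nu : fcontent A R.
Local Notation M := (Mu nu).

Lemma MuEm (E : set (StoneBorel A)) :
  (M : {measure set (StoneBorel A) -> \bar R}) E = (rS nu E)%:E.
Proof. exact: (rSE nu E). Qed.

Lemma Mum_basic a : (M : {measure set (StoneBorel A) -> \bar R}) (basic a) = (nu a)%:E.
Proof. by rewrite MuEm rS_basic. Qed.

Lemma mstone : measurable (stone A : set (StoneBorel A)).
Proof. exact: measurable_stone. Qed.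

Lemma Mu_stone : (M : {measure set (StoneBorel A) -> \bar R}) (stone A) = (nu Order.top)%:E.
Proof. by rewrite -basic_top Mum_basic. Qed.

Lemma fin_stone : ((M : {measure set (StoneBorel A) -> \bar R}) (stone A) < +oo)%E.
Proof. by rewrite Mu_stone ltry. Qed.

Lemma Gs_bound s v : `|Gs s v| <= \sum_(x <- s) `|x.2|.
Proof.
rewrite /Gs; apply: le_trans (ler_norm_sum _ _ _) _; apply: ler_sum => x _.
rewrite normrM; apply: ler_piMr => //; rewrite indicE.
by case: (_ \in _); rewrite ?normr1 ?normr0.
Qed.

Lemma mGs s : measurable_fun (stone A : set (StoneBorel A)) (Gs s : StoneBorel A -> R).
Proof.
apply: measurable_sum => x; apply: measurable_funM; first exact: measurable_cst.
by apply: measurable_indic; exact: measurable_basic.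
Qed.

Lemma integral_Gs s :
  (\int[M]_(v in (stone A : set (StoneBorel A))) (Gs s v)%:E =
   (\sum_(x <- s) x.2 * nu x.1)%:E)%E.
Proof.
rewrite (eq_integral (fun v : StoneBorel A => \sum_(x <- s) (x.2%:E * (\1_(basic x.1) v)%:E))%E); last first.
  by move=> v _; rewrite /Gs -sumEFin; apply: eq_bigr => x _; rewrite EFinM.
have intI (x : A * R) : M.-integrable (stone A : set (StoneBorel A)) (fun v => (\1_(basic x.1) v)%:E).
  apply: measurable_bounded_integrable; first exact: mstone.
  - exact: fin_stone.
  - by apply: measurable_indic; exact: measurable_basic.
  apply: (@bounded_of _ _ _ _ 1) => v _; rewrite indicE.
  by case: (_ \in _); rewrite ?normr1 ?normr0.
have intZ x : M.-integrable (stone A : set (StoneBorel A))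
    (fun v => (x.2%:E * (\1_(basic x.1) v)%:E)%E).
  by apply: integrableZl => //; exact: mstone.
rewrite (integral_sum mstone intZ).
rewrite -sumEFin; apply: eq_bigr => x _.
rewrite integralZl //; last exact: mstone.
rewrite integral_indic; [|exact: mstone|exact: measurable_basic].
rewrite setIidl ?basic_sub_stone //.
transitivity ((x.2)%:E * (nu x.1)%:E)%E; first by congr (_ * _)%E; exact: Mum_basic.
by rewrite EFinM.
exact: basic_sub_stone.
Qed.

Lemma approx_int (f : set A -> R) (e : R) (s : seq (A * R)) :
  stone_continuous f -> 0 < e ->
  (forall v, stone A v -> `|f v - Gs s v| <= e) ->
  exists J : R, (\int[M]_(v in (stone A : set (StoneBorel A))) (f v)%:E =
    (\sum_(x <- s) x.2 * nu x.1 + J)%:E)%E /\ `|J| <= e * nu Order.top.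
Proof.
move=> cf e0 hs.
pose D := (stone A : set (StoneBorel A)).
have mD : measurable D by exact: mstone.
pose h := fun v => f v - Gs s v.
have mh : measurable_fun D (h : StoneBorel A -> R).
  by apply: measurable_funB; [exact: meas_cont|exact: mGs].
have intG : M.-integrable D (EFin \o Gs s).
  apply: measurable_bounded_integrable => //; first exact: fin_stone.
    exact: mGs.
  by apply: (bounded_of (B := \sum_(x <- s) `|x.2|)) => v _; exact: Gs_bound.
have inth : M.-integrable D (EFin \o h).
  apply: measurable_bounded_integrable => //; first exact: fin_stone.
  by apply: (bounded_of (B := e)) => v Dv; exact: hs.
rewrite (eq_integral (fun v : StoneBorel A => (Gs s v)%:E + (h v)%:E))%E; last first.
  by move=> v _; rewrite -EFinD /h addrC subrK.
rewrite integralD //= integral_Gs.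
have hb : (`|\int[M]_(v in D) (h v)%:E| <= (e * nu Order.top)%:E)%E.
  apply: le_trans (le_abse_integral _ _ _) _ => //.
    exact/measurable_EFinP.
  apply: le_trans (_ : \int[M]_(v in D) (cst e%:E v) <= _)%E.
    apply: ge0_le_integral => //.
    by apply: measurableT_comp => //; exact/measurable_EFinP.
  rewrite integral_cst // EFinM le_eqVlt; apply/orP; left; apply/eqP.
  by congr (_ * _)%E; exact: Mu_stone.
have hfin : (\int[M]_(v in D) (h v)%:E)%E \is a fin_num.
  rewrite -abse_fin_num ge0_fin_numE ?abse_ge0 //.
  by apply: le_lt_trans hb _; rewrite ltry.
exists (fine (\int[M]_(v in D) (h v)%:E)%E); split.
  by rewrite EFinD fineK.
by move: hb; rewrite -[X in (`|X| <= _)%E](fineK hfin) abse_EFin lee_fin.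
Qed.

End Integrals.

Local Open Scope classical_set_scope.

Section WeakStar.
Context {d : Order.disp_t} (A : ctbDistrLatticeType d) (R : realType).
Local Open Scope ring_scope.
Variables (c_ : nat -> fcontent A R) (c : fcontent A R).
Hypothesis hc : forall a, c_ n a @[n --> \oo] --> c a.

Lemma cvg_sumc (s : seq (A * R)) :
  (\sum_(x <- s) x.2 * c_ n x.1) @[n --> \oo] --> \sum_(x <- s) x.2 * c x.1.
Proof.
elim: s => [|x s IH].
  under eq_fun do rewrite big_nil; rewrite big_nil; exact: cvg_cst.
under eq_fun do rewrite big_cons; rewrite big_cons.
by apply: cvgD => //; apply: cvgMl_tmp; exact: hc.
Qed.

Lemma weakstar_Mu : weakstar_cvg (fun n => Mu (c_ n)) (Mu c).
Proof.
move=> f cf.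
have [s1 hs1] := approx cf ltr01.
have [L [eqL _]] := approx_int c cf ltr01 hs1.
rewrite eqL; apply/fine_cvgP; split.
  apply: nearW => n; have [s2 hs2] := approx cf ltr01.
  by have [J [-> _]] := approx_int (c_ n) cf ltr01 hs2.
apply/cvgrPdist_le => eps eps0.
have ct0 : 0 < 2 * c Order.top + 2.
  by have := cnt_ge0 c Order.top; lra.
pose e := eps / (2 * c Order.top + 2).
have e0 : 0 < e by apply: divr_gt0.
have hE : eps = 2 * (e * c Order.top) + 2 * e.
  by rewrite /e; field; apply: lt0r_neq0.
have [s hs] := approx cf e0.
have [J [eqI hJ]] := approx_int c cf e0 hs.
have eqL' : \sum_(x <- s1) x.2 * c x.1 + L = \sum_(x <- s) x.2 * c x.1 + J.
  by apply: EFin_inj; rewrite -eqL eqI.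
have := cvg_sumc (s := s); move/cvgrPdist_le => /(_ e e0) hS.
have := hc (a := Order.top); move/cvgrPdist_le => /(_ 1 ltr01) htop.
apply: filterS2 hS htop => n h1 h2.
have [Jn [eqn hJn]] := approx_int (c_ n) cf e0 hs.
rewrite /= eqn /= eqL'.
set S := \sum_(x <- s) x.2 * c x.1 in h1 *.
set Sn := \sum_(x <- s) x.2 * c_ n x.1 in h1 *.
have -> : S + J - (Sn + Jn) = (S - Sn) + (J - Jn) by ring.
have t1 := ler_normD (S - Sn) (J - Jn).
have t2 := ler_normD J (- Jn); rewrite normrN in t2.
have t3 : c_ n Order.top <= c Order.top + 1.
  by move: h2; rewrite ler_distlC => /andP [_ ?].
have t4 : e * c_ n Order.top <= e * c Order.top + e.
  by rewrite -[X in _ <= _ + X]mulr1 -mulrDr ler_wpM2l // ltW.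
lra.
Qed.

End WeakStar.

Section Homs.
Local Open Scope classical_set_scope.
Local Open Scope ring_scope.
Context {dA dB : Order.disp_t} (A : ctbDistrLatticeType dA)
  (B : ctbDistrLatticeType dB) (R : realType).

Lemma mm_ge0 (mu : B -> R) : metric_measure mu -> forall x, 0 <= mu x.
Proof. by case. Qed.

Lemma mm_add (mu : B -> R) : metric_measure mu -> forall x y,
  Order.meet x y = Order.bottom -> mu (Order.join x y) = mu x + mu y.
Proof. by case. Qed.

Definition cntB (mu : B -> R) (hmu : metric_measure mu) : fcontent B R :=
  @FContent _ B R mu (mm_ge0 hmu) (mm_add hmu).

Lemma cnt_hom_add (mu : B -> R) (hmu : metric_measure mu) (psi : A -> B) :
  is_bhom psi -> forall x y, Order.meet x y = Order.bottom ->
  mu (psi (Order.join x y)) = mu (psi x) + mu (psi y).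
Proof.
case=> h0 _ hj hm _ x y xy; rewrite hj; apply: (mm_add hmu).
by rewrite -hm xy h0.
Qed.

Definition cnt_hom (mu : B -> R) (hmu : metric_measure mu) (psi : A -> B)
  (hpsi : is_bhom psi) : fcontent A R :=
  @FContent _ A R (fun a => mu (psi a)) (fun x => mm_ge0 hmu (psi x))
    (cnt_hom_add hmu hpsi).

Lemma meet_diff_split (x y : B) :
  (Order.meet (Order.meet x (Order.compl y)) (Order.meet y (Order.compl x))) = Order.bottom.
Proof.
apply/le_anti; rewrite le0x andbT -(meetxC x) lexI; apply/andP; split.
  by apply: leIxl; exact: leIl.
by apply: leIxr; exact: leIr.
Qed.

Lemma dmu_split (mu : B -> R) (hmu : metric_measure mu) x y :
  dmu mu x y = mu (Order.meet x (Order.compl y)) + mu (Order.meet y (Order.compl x)).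
Proof. by rewrite /dmu !diffE (mm_add hmu) // meet_diff_split. Qed.

Lemma mu_split (mu : B -> R) (hmu : metric_measure mu) x y :
  mu x = mu (Order.meet x y) + mu (Order.meet x (Order.compl y)).
Proof.
rewrite -(mm_add hmu); last first.
  by rewrite meetACA meetxC meetx0.
by rewrite -meetUr joinxC meetx1.
Qed.

Lemma dmu_ge (mu : B -> R) (hmu : metric_measure mu) x y :
  dmu mu x y <= mu x + mu y.
Proof.
rewrite dmu_split // (mu_split hmu x y) (mu_split hmu y x) (meetC y x).
have := mm_ge0 hmu (Order.meet x y); lra.
Qed.

Lemma dmu_dist (mu : B -> R) (hmu : metric_measure mu) x y :
  `|mu x - mu y| <= dmu mu x y.
Proof.
rewrite dmu_split // {1}(mu_split hmu x y) {1}(mu_split hmu y x) (meetC y x).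
have h1 := mm_ge0 hmu (Order.meet x (Order.compl y)).
have h2 := mm_ge0 hmu (Order.meet y (Order.compl x)).
rewrite ler_norml; apply/andP; split; lra.
Qed.

End Homs.

Section Final.
Context {d : Order.disp_t} (A : ctbDistrLatticeType d) (R : realType).
Local Notation basic := (@stone_basic d A).
Local Open Scope classical_set_scope.
Local Open Scope ring_scope.
Variable An : nat -> A.

Fixpoint Jn (N : nat) : A :=
  if N is N'.+1 then Order.join (Jn N') (An N') else Order.bottom.

Lemma Jn_ultra u N : ultrafilter u -> u (Jn N) -> exists2 i, (i < N)%N & u (An i).
Proof.
move=> su; elim: N => [|N IH] /=; first by move/(ultra_bot su).
by case/(ultra_join su) => [/IH [i iN ui]|uN]; [exists i => //; exact: ltnW|exists N].
Qed.

Lemma An_le_Jn i N : (i < N)%N -> (An i <= Jn N)%O.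
Proof.
elim: N => [//|N IH]; rewrite ltnS leq_eqVlt => /orP [/eqP ->|iN] /=.
  exact: leUr.
by apply: le_trans (IH iN) _; exact: leUl.
Qed.

Lemma Jn_disj N n : antichain An -> (N <= n)%N ->
  Order.meet (Jn N) (An n) = Order.bottom.
Proof.
move=> hanti; elim: N => [|N IH] Nn /=; first by rewrite meet0x.
rewrite meetUl IH ?(ltnW Nn) // hanti ?join0x //.
by move=> e; move: Nn; rewrite e ltnn.
Qed.

Definition U : set (StoneBorel A) := \bigcup_j basic (An j).

Lemma open_U : stone_open U.
Proof. by apply: open_bigcup => j _; exact: open_basic. Qed.

Lemma mU : measurable U.
Proof. by apply: sub_gen_smallest; exact: open_U. Qed.

Lemma U_stone : U `<=` stone A.
Proof. exact: open_sub open_U. Qed.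

Definition Phi (m : {measure set (StoneBorel A) -> \bar R}) : R := fine (m U).

Lemma radon_finU (m : {measure set (StoneBorel A) -> \bar R}) : stone_radon m ->
  m U \is a fin_num.
Proof.
case=> _ fin _; rewrite ge0_fin_numE ?measure_ge0 //.
apply: le_lt_trans fin.
apply: le_measure; rewrite ?inE //; [exact: mU|exact: measurable_stone|exact: U_stone].
Qed.

Lemma radon_finS (m : {measure set (StoneBorel A) -> \bar R}) : stone_radon m ->
  m (stone A) \is a fin_num.
Proof. by case=> _ fin _; rewrite ge0_fin_numE ?measure_ge0. Qed.

Lemma Phi_radon : radon_functional Phi.
Proof.
split.
- move=> m1 m2 m3 r1 r2 r3 h; rewrite /Phi h; last exact: mU.
  by rewrite fineD // ?radon_finU.
- move=> k m1 m2 k0 r1 r2 h; rewrite /Phi h; last exact: mU.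
  by rewrite fineM // radon_finU.
- exists 1 => m r; rewrite mul1r /Phi ger0_norm ?fine_ge0 ?measure_ge0 //.
  apply: fine_le; [exact: radon_finU|exact: radon_finS|].
  apply: le_measure; rewrite ?inE //; [exact: mU|exact: measurable_stone|exact: U_stone].
Qed.

Lemma PhiE (nu : fcontent A R) : Phi (Mu nu) = rS nu U.
Proof. by []. Qed.

Lemma le_rS_U (nu : fcontent A R) x : basic x `<=` U -> nu x <= rS nu U.
Proof. by move=> h; rewrite -rS_basic; exact: rS_le. Qed.

Lemma basic_JnU N n : basic (Order.join (Jn N) (An n)) `<=` U.
Proof.
rewrite basic_join => u [[su /(Jn_ultra su) [i _ ui]]|bu].
  by exists i => //; split.
by exists n.
Qed.

End Final.

Section Main.
Local Open Scope classical_set_scope.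
Local Open Scope ring_scope.

Lemma prop_aux (R : realType) (dA dB : Order.disp_t)
    (A : ctbDistrLatticeType dA) (B : ctbDistrLatticeType dB)
    (mu : B -> R) (phi : A -> B) (phi_ : nat -> A -> B)
    (An : nat -> A) (eps : R) :
  positive_grothendieck R A ->
  metric_measure mu ->
  is_bhom phi ->
  (forall n, is_bhom (phi_ n)) ->
  antichain An ->
  0 < eps ->
  (forall n, eps <= dmu mu (phi_ n (An n)) (phi (An n))) ->
  ~ pointwise_metric_cvg mu phi_ phi.
Proof.
move=> hG hmu hphi hphin hanti eps0 hd pmc.
pose c := cnt_hom hmu hphi.
pose c_ := fun n => cnt_hom hmu (hphin n).
have hc : forall a, c_ n a @[n --> \oo] --> c a.
  move=> a; apply/cvgrPdist_le => e e0.
  have := pmc a; move/cvgrPdist_le => /(_ e e0).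
  apply: filterS => n h; rewrite /c_ /c /= distrC.
  apply: le_trans (dmu_dist hmu _ _) _.
  by move: h; rewrite sub0r normrN ger0_norm // /dmu (mm_ge0 hmu).
have ws := @weakstar_Mu _ A R c_ c hc.
have wc := hG (fun n => Mu (c_ n)) (Mu c) (fun n => radon_Mu (c_ n)) (radon_Mu c) ws.
have hr0 := wc (@Phi _ A R An) (@Phi_radon _ A R An).
have hr : rS (c_ n) (U An) @[n --> \oo] --> rS c (U An) := hr0.
have e4 : 0 < eps / 4 by apply: divr_gt0.
have e8 : 0 < eps / 8 by apply: divr_gt0.
pose L := rS c (U An).
have oU := open_U An.
have [a [ha hlt]] := @rO_approx _ A R c (U An) (eps / 4) e4.
have hLO := rS_open c oU.
have [|bs [Pbs abs]] := @cpt _ A (fun b => exists i, stone_basic b `<=` stone_basic (An i)) a.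
  move=> u su ua; have [i _ bi] := ha u (conj su ua).
  by exists (An i); split; [exists i|case: bi].
have [N hN] := find_N Pbs.
have aJ : (a <= Jn An N)%O.
  apply: basic_sub => u [su ua]; split => //.
  have /(ultra_bigJ _ su) [b bin ub] := ultra_up su ua abs.
  have [i iN [_ ui]] := hN b bin u (conj su ub).
  exact: ultra_up su ui (An_le_Jn An iN).
have cJ : L - eps / 4 <= c (Jn An N).
  have := cnt_le c aJ; rewrite /L; lra.
have hAn : forall n, (N <= n)%N -> c (An n) <= eps / 4.
  move=> n Nn; have := le_rS_U c (basic_JnU (An := An) (N := N) (n := n)).
  rewrite (cnt_add c (Jn_disj hanti Nn)) -/L; lra.
have hg : forall n, (N <= n)%N -> c_ n (Jn An N) + eps - c (An n) <= rS (c_ n) (U An).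
  move=> n Nn; have := le_rS_U (c_ n) (basic_JnU (An := An) (N := N) (n := n)).
  rewrite (cnt_add (c_ n) (Jn_disj hanti Nn)).
  have := hd n; have := dmu_ge hmu (phi_ n (An n)) (phi (An n)).
  rewrite /c_ /c /=; lra.
have hJ := hc (Jn An N); move/cvgrPdist_le: hJ => /(_ (eps / 4) e4) hJ.
move/cvgrPdist_le: hr => /(_ (eps / 8) e8) hr.
have [n [Nn [h2 h3]]] := filter_ex (@filterS3 _ _ _ _ _ _ _ (fun n a b c => conj a (conj b c))
  (nbhs_infty_ge N) hJ hr).
have := hAn n Nn; have := hg n Nn.
move: h2 h3; rewrite !ler_distlC -/L => /andP [? ?] /andP [? ?].
lra.
Qed.
End Main.

Local Close Scope classical_set_scope.
Unset Implicit Arguments.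
Set Strict Implicit.
Local Open Scope ring_scope.

Theorem proposition5p7 (R : realType) (dA dB : Order.disp_t)
    (A : ctbDistrLatticeType dA) (B : ctbDistrLatticeType dB)
    (mu : B -> R) (phi : A -> B) (phi_ : nat -> A -> B)
    (An : nat -> A) (eps : R) :
  positive_grothendieck R A ->
  metric_measure mu ->
  is_bhom phi ->
  (forall n, is_bhom (phi_ n)) ->
  antichain An ->
  0 < eps ->
  (forall n, eps <= dmu mu (phi_ n (An n)) (phi (An n))) ->
  ~ pointwise_metric_cvg mu phi_ phi.
Proof. exact: prop_aux. Qed.
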